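(* For any Horn-implication $\iota$ with a non-rooted tree-profile, there is a Horn-implication $\iota'$ with a rooted tree-profile (using a diamond operator not occurring in $\iota$) such that the spi-logic $\mathsf{SPi}+\{\iota,\iota'\}$ is not complete.
   Context: Fix a signature (set of relation symbols $R$ with associated diamonds $\Diamond_R$). Sp-formulas: built from propositional variables and $\top$ with $\wedge$ and the $\Diamond_R$; sp-implications $\sigma\to\tau$. A SLO is an algebra $(A,\wedge,\top,\Diamond_R)_R$ with $(A,\wedge,\top)$ a meet-semilattice with top and each $\Diamond_R$ monotone; it validates $\sigma\to\tau$ if $\sigma[\mathfrak a]\le\tau[\mathfrak a]$ for all valuations. Frames $(W,R^{\mathfrak F})_R$ with standard Kripke semantics. $\Sigma\models_{\mathsf{Kr}}\iota$ (resp. $\models_{\mathsf{SLO}}$): valid in all frames (resp. SLOs) validating $\Sigma$. $\mathsf{SPi}+\Sigma$ is complete if these coincide for all sp-implications. A profile $\pi=(\mathfrak G,S,u,v)$: $\mathfrak G=(\Delta,R^{\mathfrak G})_R$ a finite rooted frame, $u,v\in\Delta$, $S$ a relation symbol with $(u,v)\notin S^{\mathfrak G}$; $\Phi_\pi=\forall\bar x\big(\bigwedge_{(x_i,x_j)\in R^{\mathfrak G}}R(x_i,x_j)\to S(u,v)\big)$. An sp-implication is a Horn-implication with profile $\pi$ if it is valid in exactly the frames satisfying $\Phi_\pi$. $\pi$ is a tree-profile if $(\Delta,\bigcup_RR^{\mathfrak G})$ is a finite directed tree and the $R^{\mathfrak G}$ are pairwise disjoint; a tree-profile is rooted if $u$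 is the root, non-rooted otherwise. *)

(* Defs.v *)
From Stdlib Require Import Relations.
From mathcomp Require Import ssreflect ssrbool eqtype fintype.

Set Implicit Arguments.
Unset Printing Implicit Defensive.
Unset Strict Implicit.

Section Defs.
Variable Rel : Type.

Inductive spform : Type :=
| spVar : nat -> spform
| spTop : spform
| spAnd : spform -> spform -> spform
| spDia : Rel -> spform -> spform.

Record spimpl : Type := SpImpl { ant : spform ; cons : spform }.

Fixpoint occurs_form (R : Rel) (f : spform) : Prop :=
  match f with
  | spVar _ => False
  | spTop => False
  | spAnd f g => occurs_form R f \/ occurs_form R g
  | spDia R' f => R' = R \/ occurs_form R f
  end.

Definition occurs (R : Rel) (i : spimpl) : Prop :=
  occurs_form R (ant i) \/ occurs_form R (cons i).

Record frame : Type := Frame { W : Type ; frel : Rel -> W -> W -> Prop }.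

Fixpoint ksat (F : frame) (V : nat -> W F -> Prop) (f : spform) (w : W F) : Prop :=
  match f with
  | spVar n => V n w
  | spTop => True
  | spAnd f g => ksat V f w /\ ksat V g w
  | spDia R f => exists w', @frel F R w w' /\ ksat V f w'
  end.

Definition frame_valid (F : frame) (i : spimpl) : Prop :=
  forall (V : nat -> W F -> Prop) (w : W F), ksat V (ant i) w -> ksat V (cons i) w.

Record SLO : Type := MkSLO {
  car : Type ;
  meet : car -> car -> car ;
  top : car ;
  dia : Rel -> car -> car ;
  meetA : forall a b c, meet a (meet b c) = meet (meet a b) c ;
  meetC : forall a b, meet a b = meet b a ;
  meetI : forall a, meet a a = a ;
  meet_top : forall a, meet a top = a ;
  dia_mono : forall R a b, meet a b = a -> meet (dia R a) (dia R b) = dia R a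
}.

Definition sle (A : SLO) (a b : car A) : Prop := meet a b = a.

Fixpoint seval (A : SLO) (v : nat -> car A) (f : spform) : car A :=
  match f with
  | spVar n => v n
  | spTop => top A
  | spAnd f g => meet (seval v f) (seval v g)
  | spDia R f => @dia A R (seval v f)
  end.

Definition slo_valid (A : SLO) (i : spimpl) : Prop :=
  forall v : nat -> car A, sle (seval v (ant i)) (seval v (cons i)).

Definition kr_entails (Sigma : spimpl -> Prop) (i : spimpl) : Prop :=
  forall F : frame, (forall j, Sigma j -> frame_valid F j) -> frame_valid F i.

Definition slo_entails (Sigma : spimpl -> Prop) (i : spimpl) : Prop :=
  forall A : SLO, (forall j, Sigma j -> slo_valid A j) -> slo_valid A i.

Definition complete (Sigma : spimpl -> Prop) : Prop :=
  forall i, kr_entails Sigma i <-> slo_entails Sigma i.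

Definition edge (D : Type) (RG : Rel -> D -> D -> Prop) (x y : D) : Prop :=
  exists R, RG R x y.

Definition is_root (D : Type) (RG : Rel -> D -> D -> Prop) (r : D) : Prop :=
  forall x, clos_refl_trans D (edge RG) r x.

Record profile : Type := Profile {
  pD : finType ;
  pR : Rel -> pD -> pD -> Prop ;
  pS : Rel ;
  pu : pD ;
  pv : pD ;
  p_rooted : exists r, is_root pR r ;
  p_notS : ~ pR pS pu pv
}.

Definition sat_Phi (F : frame) (p : profile) : Prop :=
  forall g : pD p -> W F,
    (forall R x y, @pR p R x y -> @frel F R (g x) (g y)) ->
    @frel F (pS p) (g (pu p)) (g (pv p)).

Definition horn_with_profile (i : spimpl) (p : profile) : Prop :=
  forall F : frame, frame_valid F i <-> sat_Phi F p.

Definition directed_tree_with_root (D : Type) (RG : Rel -> D -> D -> Prop) (r : D) : Prop :=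
  is_root RG r /\
  (forall y, ~ edge RG y r) /\
  (forall x, x <> r -> exists y, edge RG y x) /\
  (forall x y1 y2, edge RG y1 x -> edge RG y2 x -> y1 = y2).

Definition pairwise_disjoint (D : Type) (RG : Rel -> D -> D -> Prop) : Prop :=
  forall R R' x y, R <> R' -> RG R x y -> RG R' x y -> False.

Definition tree_profile (p : profile) : Prop :=
  (exists r, directed_tree_with_root (@pR p) r) /\ pairwise_disjoint (@pR p).

Definition rooted_tree_profile (p : profile) : Prop :=
  tree_profile p /\ directed_tree_with_root (@pR p) (pu p).

Definition nonrooted_tree_profile (p : profile) : Prop :=
  tree_profile p /\ ~ directed_tree_with_root (@pR p) (pu p).

End Defs.

(* Main.v *)
Require Import Defs.
From Stdlib Require Import Relations ClassicalEpsilon FunctionalExtensionality PropExtensionality ProofIrrelevance Classical.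
From Stdlib Require List FinFun.
From mathcomp Require Import ssreflect ssrbool ssrfun eqtype ssrnat seq choice fintype.
From mathcomp Require Import zify.
Set Implicit Arguments.
Unset Strict Implicit.
Unset Printing Implicit Defensive.

Section Tree.
Variables (Rel : Type) (D : finType) (pR : Rel -> D -> D -> Prop) (r : D).
Hypothesis Htr : directed_tree_with_root pR r.

Lemma rt_ind_root (P : D -> Prop) : P r -> (forall a b, edge pR a b -> P a -> P b) -> forall x, P x.
Proof.
move=> Pr Hs x; case: Htr => Hroot _.
have H := clos_rt_rtn1 _ _ _ _ (Hroot x); elim: H => //.
move=> y z Hyz _ Py; exact: Hs Hyz Py.
Qed.

Inductive Pth : nat -> D -> Prop :=
| Pth0 : Pth 0 r
| PthS n a b : Pth n a -> edge pR a b -> Pth n.+1 b.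

Lemma Pth_ex x : exists n, Pth n x.
Proof.
apply: (@rt_ind_root (fun x => exists n, Pth n x)); first by exists 0; constructor.
move=> a b Hab [n Hn]; exists n.+1; exact: PthS Hn Hab.
Qed.

Lemma Pth_uniq n m x : Pth n x -> Pth m x -> n = m.
Proof.
case: Htr => _ [Hnoin [_ Hpar]].
move=> Hn; elim: Hn m => [|n' a b Ha IH Hab] m Hm.
  by inversion Hm; subst => //; exfalso; exact: Hnoin H0.
inversion Hm; subst; first by exfalso; exact: Hnoin Hab.
have ? := Hpar _ _ _ Hab H0; subst; by rewrite (IH _ H).
Qed.

Definition dep (x : D) : nat := proj1_sig (constructive_indefinite_description _ (Pth_ex x)).
Lemma depP x : Pth (dep x) x.
Proof. rewrite /dep; by case: constructive_indefinite_description. Qed.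

Lemma dep_r : dep r = 0.
Proof. apply: (Pth_uniq (depP r)); constructor. Qed.

Lemma dep_edge a b : edge pR a b -> dep b = (dep a).+1.
Proof. move=> Hab; apply: (Pth_uniq (depP b)); exact: PthS (depP a) Hab. Qed.

Lemma dep0 x : dep x = 0 -> x = r.
Proof. move=> H; have := depP x; rewrite H => Hp; by inversion Hp. Qed.

Lemma dep_rt a b : clos_refl_trans D (edge pR) a b -> dep a <= dep b.
Proof.
move=> Hr; have {}Hr := clos_rt_rtn1 _ _ _ _ Hr; elim: Hr => // y z Hyz _ IH; rewrite (dep_edge Hyz); lia.
Qed.

Definition xmax : D := [arg max_(x > r) dep x].
Lemma dep_le x : dep x <= dep xmax.
Proof. rewrite /xmax; case: arg_maxnP => // m _ Hm; exact: Hm. Qed.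

Lemma hom_root (h : D -> D) : (forall R a b, pR R a b -> pR R (h a) (h b)) -> h r = r.
Proof.
move=> Hh.
have Hd : forall x, dep (h x) = dep x + dep (h r).
  apply: rt_ind_root; first by rewrite dep_r.
  move=> a b [R Hab] IH; rewrite (dep_edge (ex_intro _ R Hab)).
  rewrite (dep_edge (ex_intro _ R (Hh _ _ _ Hab))) IH; lia.
have := Hd xmax; have := dep_le (h xmax) => H1 H2.
apply: dep0; lia.
Qed.

Lemma par_ex x : x <> r -> exists y, edge pR y x.
Proof. by case: Htr => _ [_ [H _]]; apply: H. Qed.

Lemma par_uniq x y1 y2 : edge pR y1 x -> edge pR y2 x -> y1 = y2.
Proof. by case: Htr => _ [_ [_ H]]; apply: H. Qed.

Lemma no_in x : ~ edge pR x r.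
Proof. by case: Htr => _ [H _]; apply: H. Qed.

Lemma root_child x : x <> r -> exists c, edge pR r c.
Proof.
move=> Hx; case: Htr => Hroot _.
have H := clos_rt_rt1n _ _ _ _ (Hroot x).
case: H Hx => [//|y z Hry _ _]; by exists y.
Qed.

Lemma rt_last (x y : D) : clos_refl_trans D (edge pR) x y ->
  y = x \/ exists p, clos_refl_trans D (edge pR) x p /\ edge pR p y.
Proof.
move=> H; have {}H := clos_rt_rtn1 _ _ _ _ H.
case: H => [|p z H1 H2]; first by left.
by right; exists p; split => //; apply: clos_rtn1_rt.
Qed.

End Tree.

Definition bigAnd (Rel : Type) (l : seq (spform Rel)) : spform Rel := foldr (@spAnd Rel) (@spTop Rel) l.

Lemma ksat_bigAnd (Rel : Type) (T : eqType) (F : frame Rel) (V : nat -> W F -> Prop) (G : T -> spform Rel) (s : seq T) w :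
  ksat V (bigAnd (map G s)) w <-> (forall c, c \in s -> ksat (F:=F) V (G c) w).
Proof.
elim: s => [|a s IH] /=; first by split.
rewrite IH; split.
  by case=> H1 H2 c; rewrite inE => /orP [/eqP -> //| Hc]; exact: H2.
move=> H; split; first by apply: H; rewrite inE eqxx.
by move=> c Hc; apply: H; rewrite inE Hc orbT.
Qed.

Section Form.
Variables (Rel : Type) (D : finType) (pR : Rel -> D -> D -> Prop) (r : D).
Hypothesis Htr : directed_tree_with_root pR r.
Variables (lab : D -> D -> Rel) (ext : D -> spform Rel).

Definition idx (x : D) : nat := pickle x.
Lemma idx_inj (x y : D) : idx x = idx y -> x = y.
Proof. exact: (pcan_inj (@pickleK_inv D)). Qed.

Definition isedge (x c : D) : bool := if excluded_middle_informative (edge pR x c) then true else false.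

Fixpoint Fm (n : nat) (x : D) : spform Rel :=
  match n with
  | 0 => spAnd (spVar Rel (idx x)) (ext x)
  | n'.+1 => spAnd (spAnd (spVar Rel (idx x)) (ext x))
       (bigAnd (map (fun c => if isedge x c then spDia (lab x c) (Fm n' c) else spTop Rel) (enum D)))
  end.

Lemma Fm_hom (F : frame Rel) (V : nat -> W F -> Prop) (g : D -> W F) :
  (forall a b, edge pR a b -> Defs.frel (lab a b) (g a) (g b)) ->
  (forall y, V (idx y) (g y)) -> (forall y, ksat V (ext y) (g y)) ->
  forall n x, ksat V (Fm n x) (g x).
Proof.
move=> He Hv Hx; elim=> [|n IH] x /=; first by split.
split; first by split.
apply/ksat_bigAnd => c _; rewrite /isedge; case: excluded_middle_informative => //= Hxc.
exists (g c); split; [exact: He | exact: IH].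
Qed.

Definition NN := dep Htr (xmax Htr).

Lemma Fm_base (F : frame Rel) (V : nat -> W F -> Prop) n x w : ksat (F:=F) V (Fm n x) w -> V (idx x) w /\ ksat V (ext x) w.
Proof. by case: n => [|n] /=; [case | case=> [[]]]. Qed.

Lemma Fm_step (F : frame Rel) (V : nat -> W F -> Prop) a b w : edge pR a b ->
  ksat (F:=F) V (Fm (NN - dep Htr a) a) w ->
  exists w', Defs.frel (lab a b) w w' /\ ksat V (Fm (NN - dep Htr b) b) w'.
Proof.
move=> Hab.
have Hd := dep_edge Htr Hab; have Hle := dep_le Htr b.
have -> : NN - dep Htr a = (NN - dep Htr b).+1 by rewrite /NN; lia.
move=> /= [_ /ksat_bigAnd H].
have := H b (mem_enum _ b); rewrite /isedge; case: excluded_middle_informative => //.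
Qed.

Section Ext.
Variables (F : frame Rel) (V : nat -> W F -> Prop) (w : W F).
Hypothesis Hw : ksat V (Fm NN r) w.

Definition Z x w' := ksat (F:=F) V (Fm (NN - dep Htr x) x) w'.
Definition par (x : D) : D := epsilon (inhabits r) (fun p => edge pR p x).

Fixpoint G (k : nat) (x : D) : W F :=
  match k with
  | 0 => w
  | k'.+1 => epsilon (inhabits w) (fun w'' => Defs.frel (lab (par x) x) (G k' (par x)) w'' /\ Z x w'')
  end.

Lemma par_spec x : x <> r -> edge pR (par x) x.
Proof.
move=> Hx; rewrite /par; apply: (epsilon_spec (inhabits r) (fun p => edge pR p x)).
exact: (par_ex Htr Hx).
Qed.

Lemma G_spec k : forall x, dep Htr x = k -> Z x (G k x) /\
   (k > 0 -> Defs.frel (lab (par x) x) (G k.-1 (par x)) (G k x)).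
Proof.
elim: k => [|k IH] x Hx.
  have -> := dep0 Hx; split => //; rewrite /Z dep_r subn0; exact: Hw.
have Hxr : x <> r by move=> E; move: Hx; rewrite E dep_r.
have Hp := par_spec Hxr.
have Hdp : dep Htr (par x) = k by have := dep_edge Htr Hp; rewrite Hx; case.
have [Hz _] := IH _ Hdp.
have Hex := Fm_step Hp Hz.
have := epsilon_spec (inhabits w) (fun w'' => Defs.frel (lab (par x) x) (G k (par x)) w'' /\ Z x w'') Hex.
by case=> H1 H2; split.
Qed.

Lemma Fm_ext : exists g : D -> W F, g r = w /\
  (forall a b, edge pR a b -> Defs.frel (lab a b) (g a) (g b)) /\
  (forall y, V (idx y) (g y)) /\ (forall y, ksat V (ext y) (g y)).
Proof.
exists (fun x => G (dep Htr x) x); split; first by rewrite dep_r.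
split.
  move=> a b Hab; have Hd := dep_edge Htr Hab.
  have Hbr : b <> r by move=> E; apply: (no_in Htr); rewrite -E; exact: Hab.
  have Hpb := par_uniq Htr (par_spec Hbr) Hab.
  have [_ H] := G_spec Hd; have := H (ltn0Sn _); rewrite Hpb Hd /=.
  done.
have HZ y : Z y (G (dep Htr y) y) by case: (G_spec (erefl (dep Htr y))).
by split=> y; have [] := Fm_base (HZ y).
Qed.
End Ext.
End Form.

Section Alg.
Variables (Rel : Type) (D : finType) (pR : Rel -> D -> D -> Prop) (u : D) (Q : Rel).
Hypothesis noQ : forall a b, ~ pR Q a b.

Definition frelH (R : Rel) (h1 h2 : option D) : Prop :=
  match h1, h2 with
  | None, None => R <> Q
  | None, Some b => R = Q /\ b = u
  | Some _, None => False
  | Some a, Some b => pR R a b /\ clos_refl_trans D (edge pR) u a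
  end.

Definition HF : frame Rel := @Frame Rel (option D) frelH.

Definition adm (X : option D -> Prop) : Prop := (exists a, X (Some a)) -> X None.
Definition carA := {X : option D -> Prop | adm X}.

Lemma carA_ext (X Y : carA) : (forall h, proj1_sig X h <-> proj1_sig Y h) -> X = Y.
Proof.
case: X => X HX; case: Y => Y HY /= H.
have E : X = Y by apply: functional_extensionality => h; apply: propositional_extensionality.
subst; f_equal; apply: proof_irrelevance.
Qed.

Definition meetH (X Y : carA) : carA.
Proof.
exists (fun h => proj1_sig X h /\ proj1_sig Y h).
case: X => X HX; case: Y => Y HY /= [a [Ha1 Ha2]]; split; [apply: HX | apply: HY]; by exists a.
Defined.

Definition topH : carA.
Proof. by exists (fun _ => True). Defined.

Definition diaH (R : Rel) (X : carA) : carA.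
Proof.
exists (fun h => exists h', frelH R h h' /\ proj1_sig X h').
case: X => X HX /= [a [[b|] [Hab Hb]]] //=.
case: (classic (R = Q)) => HR.
  by subst; case: Hab => /noQ.
exists None; split => //; apply: HX; by exists b.
Defined.

Lemma meetH_A a b c : meetH a (meetH b c) = meetH (meetH a b) c.
Proof. apply: carA_ext => h /=; tauto. Qed.
Lemma meetH_C a b : meetH a b = meetH b a.
Proof. apply: carA_ext => h /=; tauto. Qed.
Lemma meetH_I a : meetH a a = a.
Proof. apply: carA_ext => h /=; tauto. Qed.
Lemma meetH_T a : meetH a topH = a.
Proof. apply: carA_ext => h /=; tauto. Qed.
Lemma diaH_mono R a b : meetH a b = a -> meetH (diaH R a) (diaH R b) = diaH R a.
Proof.
move=> E; have Hab : forall h, proj1_sig a h -> proj1_sig b h.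
  by move=> h; rewrite -E /=; case.
apply: carA_ext => h /=; split; first by case.
move=> [h' [H1 H2]]; split; exists h'; split => //; exact: Hab.
Qed.

Definition AH : SLO Rel := MkSLO meetH_A meetH_C meetH_I meetH_T diaH_mono.

Lemma seval_ksat (v : nat -> car AH) f h :
  proj1_sig (seval v f) h <-> ksat (F:=HF) (fun n h => proj1_sig (v n) h) f h.
Proof.
elim: f h => [n|| f IHf g IHg | R f IH] h //=.
  by rewrite IHf IHg.
split; move=> [h' [H1 H2]]; exists h'; split => //; by apply/IH.
Qed.

Lemma sle_AH (a b : car AH) : sle a b <-> forall h, proj1_sig a h -> proj1_sig b h.
Proof.
split; first by move=> E h; rewrite /sle in E; rewrite -E /=; case.
move=> H; apply: carA_ext => h /=; split; first by case.
by move=> Ha; split => //; apply: H.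
Qed.

End Alg.

Lemma fresh_nat (T : Type) (f : nat -> T) (Hf : forall m n, f m = f n -> m = n) (l : list T) :
  exists n, ~ List.In (f n) l.
Proof.
apply: NNPP => H.
have Hall : forall n, List.In (f n) l.
  by move=> n; apply: NNPP => Hn; apply: H; exists n.
have Hnd : List.NoDup (List.map f (List.seq 0 (size l).+1)).
  apply: FinFun.Injective_map_NoDup; first by move=> x y; apply: Hf.
  exact: List.seq_NoDup.
have Hinc : List.incl (List.map f (List.seq 0 (size l).+1)) l.
  by move=> x /List.in_map_iff [n [<- _]].
have := List.NoDup_incl_length Hnd Hinc.
rewrite List.length_map List.length_seq.
have -> : List.length l = size l by [].
lia.
Qed.

Fixpoint rels_of (Rel : Type) (f : spform Rel) : list Rel :=
  match f with
  | spVar _ => nil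
  | spTop => nil
  | spAnd f g => List.app (rels_of f) (rels_of g)
  | spDia R f => (R :: rels_of f)%list
  end.

Lemma occurs_rels (Rel : Type) (R : Rel) f : occurs_form R f -> List.In R (rels_of f).
Proof.
elim: f => [n|| f IHf g IHg | R' f IH] //=.
  by case=> H; apply: List.in_or_app; [left; apply: IHf | right; apply: IHg].
by case=> [->|H]; [left | right; apply: IH].
Qed.

Lemma In_mem (T : eqType) (x : T) (s : seq T) : x \in s -> List.In x s.
Proof.
elim: s => [|a s IH] //=; rewrite inE => /orP [/eqP ->|H]; [by left | right; exact: IH].
Qed.

Section Two.
Variables (Rel : Type) (Q L : Rel).
Definition pR2 (R : Rel) (a b : bool) : Prop := R = Q /\ a = false /\ b = true.
Lemma dtree2 : directed_tree_with_root pR2 false.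
Proof.
split.
  case; [apply: rt_step; exists Q; by [] | exact: rt_refl].
split; first by move=> y [R [_ [_ H]]].
split.
  by case=> // _; exists false; exists Q.
by move=> x y1 y2 [R1 [_ [-> _]]] [R2 [_ [-> _]]].
Qed.
Lemma root2 : exists r, is_root pR2 r.
Proof. by exists false; case: dtree2. Qed.
Hypothesis HLQ : L <> Q.
Lemma notS2 : ~ pR2 L false true.
Proof. by case. Qed.
Definition pi2 : profile Rel := @Profile Rel bool pR2 L false true root2 notS2.
Definition iota2 : spimpl Rel := SpImpl (spDia Q (spVar Rel 0)) (spDia L (spVar Rel 0)).

Lemma rooted2 : rooted_tree_profile pi2.
Proof.
split; last exact: dtree2.
split; first by exists false; exact: dtree2.
move=> R R' x y HR [E1 _] [E2 _]; apply: HR; by rewrite E1 E2.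
Qed.

Lemma horn2 : horn_with_profile iota2 pi2.
Proof.
move=> F; split.
  move=> Hv g Hg /=.
  have := Hv (fun _ x => x = g true) (g false); rewrite /=.
  case; first by exists (g true); split => //; apply: Hg.
  by move=> w0 [H E]; rewrite -E.
move=> HP V w /= [w' [H1 H2]].
exists w'; split => //.
have := HP (fun b => if b then w' else w); apply.
by move=> R x y [-> [-> ->]].
Qed.
End Two.

Theorem theorem5p18 (Rel : Type)
  (Rel_infinite : exists f : nat -> Rel, forall m n, f m = f n -> m = n)
  (iota : spimpl Rel) (pi : profile Rel) :
  nonrooted_tree_profile pi ->
  horn_with_profile iota pi ->
  exists (iota' : spimpl Rel) (pi' : profile Rel),
    rooted_tree_profile pi' /\
    horn_with_profile iota' pi' /\
    (exists R : Rel, ~ occurs R iota /\ occurs R iota') /\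
    ~ complete (fun j => j = iota \/ j = iota').
Proof.
move=> [[[r Htr] Hdisj] Hnr] Hhorn.
case: Rel_infinite => f Hf.
have Hur : pu pi <> r by move=> E; apply: Hnr; rewrite E.
have [y0 [L HL]] := par_ex Htr Hur.
pose lab := fun a b => epsilon (inhabits (pS pi)) (fun R => @pR _ pi R a b).
have Hlab : forall R a b, @pR _ pi R a b -> lab a b = R.
  move=> R a b H; have H' : pR (lab a b) a b.
    exact: (epsilon_spec (inhabits (pS pi)) (fun R => @pR _ pi R a b) (ex_intro _ R H)).
  by apply: NNPP => E; apply: (Hdisj _ _ _ _ E H' H).
pose labs := List.flat_map (fun a => List.map (fun b => lab a b) (enum (pD pi))) (enum (pD pi)).
have [n Hn] := fresh_nat Hf (List.app (rels_of (ant iota)) (List.app (rels_of (cons iota)) (pS pi :: labs)%list)).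
set Q := f n in Hn.
have HQi : ~ occurs Q iota.
  by case=> H; apply: Hn; apply: List.in_or_app; [left | right; apply: List.in_or_app; left]; apply: occurs_rels.
have HQS : pS pi <> Q.
  by move=> E; apply: Hn; apply: List.in_or_app; right; apply: List.in_or_app; right; left.
have noQ : forall a b, ~ @pR _ pi Q a b.
  move=> a b H; apply: Hn; apply: List.in_or_app; right; apply: List.in_or_app; right; right.
  apply/List.in_flat_map; exists a; split; first exact: In_mem (mem_enum _ a).
  apply/List.in_map_iff; exists b; split; first exact: Hlab.
  exact: In_mem (mem_enum _ b).
have HLQ : L <> Q by move=> E; apply: (noQ y0 (pu pi)); rewrite -E.
exists (iota2 Q L), (pi2 HLQ).
split; first exact: rooted2.
split; first exact: horn2.
split; first by exists Q; split => //; left; left.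

pose lab' := fun a b => if (a == y0) && (b == pu pi) then Q else lab a b.
pose ext := fun x => if x == pu pi then spDia (pS pi) (spVar Rel (idx (D:=pD pi) (pv pi))) else spTop Rel.
pose sig := Fm (@pR _ pi) lab' (fun _ => spTop Rel) (NN Htr) r.
pose tau := Fm (@pR _ pi) lab' ext (NN Htr) r.
have Hkr : kr_entails (fun j => j = iota \/ j = iota2 Q L) (SpImpl sig tau).
  move=> F HF V w /= Hs.
  have Hi := HF iota (or_introl erefl).
  have Hi' := HF _ (or_intror erefl).
  have HPhi := proj1 (Hhorn F) Hi.
  have HQL : forall a b : W F, Defs.frel Q a b -> Defs.frel L a b.
    move=> a b Hab; have := Hi' (fun _ x => x = b) a; rewrite /=.
    case; first by exists b.
    by move=> c [H E]; rewrite -E.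
  have [g [Hgr [Hge [Hgv _]]]] := Fm_ext Hs.
  have Hhom : forall R a b, pR R a b -> Defs.frel R (g a) (g b).
    move=> R a b H; have := Hge a b (ex_intro _ R H); rewrite /lab'.
    case: ifP => [/andP [/eqP Ea /eqP Eb] | _].
      subst a b.
      have ER : R = L by apply: NNPP => E; exact: Hdisj _ _ _ _ E H HL.
      by rewrite ER; apply: HQL.
    by rewrite (Hlab _ _ _ H).
  have HS := HPhi g Hhom.
  rewrite -Hgr; apply: (Fm_hom Hge Hgv) => y.
  rewrite /ext; case: eqP => [->|_] //=.
  by exists (g (pv pi)); split => //.
move=> Hc.
have Hslo := proj1 (Hc _) Hkr.
pose A := AH (pu pi) noQ.
have Hnur : ~ clos_refl_trans _ (edge (@pR _ pi)) (pu pi) r.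
  move=> H; have := dep_rt Htr H; rewrite dep_r => H0.
  by apply: Hur; apply: (@dep0 _ _ _ _ Htr (pu pi)); lia.
have HphiH : sat_Phi (HF (@pR _ pi) (pu pi) Q) pi.
  move=> g Hg /=.
  case E: (g r) => [a|].
    have Hsome : forall x, exists c, g x = Some c.
      apply: (rt_ind_root Htr); first by exists a.
      move=> x y [R Hxy] [c Hcx]; have := Hg _ _ _ Hxy; rewrite Hcx /=.
      by case: (g y) => [d|] //; exists d.
    pose h := fun x => match g x with Some c => c | None => r end.
    have Hh : forall R x y, pR R x y -> pR R (h x) (h y).
      move=> R x y H; have := Hg _ _ _ H; rewrite /h.
      by case: (Hsome x) => cx ->; case: (Hsome y) => cy ->; case.
    have Hhr := hom_root Htr Hh.
    rewrite /h E in Hhr; subst a.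
    have [c Hrc] := root_child Htr Hur.
    case: Hrc => R Hrc.
    have := Hg _ _ _ Hrc; rewrite E /=.
    by case: (g c) => [d|] //= [_ /Hnur].
  have Hnone : forall x, g x = None.
    apply: (rt_ind_root Htr) => // x y [R Hxy] Hx.
    have := Hg _ _ _ Hxy; rewrite Hx /=.
    by case: (g y) => [d|] //= [E' _]; exfalso; apply: (noQ x y); rewrite -E'.
  by rewrite !Hnone /=.
have HvalA : forall j, (j = iota \/ j = iota2 Q L) -> slo_valid A j.
  move=> j [->|->] vv; apply/sle_AH => h.
    rewrite !seval_ksat; apply: (proj2 (Hhorn _) HphiH).
  rewrite /= => -[h' [H1 H2]].
  case: h h' H1 H2 => [a|] [b|] //=.
  - by case=> /noQ.
  - move=> [_ Eb] H2; exists None; split => //=.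
    by apply: (proj2_sig (vv 0)); exists b.

pose rtu := clos_refl_trans _ (edge (@pR _ pi)) (pu pi).
pose g0 := fun x => if excluded_middle_informative (rtu x) then Some x else None.
pose vv : nat -> car A := fun m => exist (@adm (pD pi)) (fun h => h = None \/ exists x, idx x = m /\ h = g0 x) (fun _ => or_introl erefl).
have Hny0 : ~ rtu y0.
  move=> H; have := dep_rt Htr H; rewrite (dep_edge Htr (ex_intro _ L HL)); lia.
have g0r : g0 r = None by rewrite /g0; case: excluded_middle_informative.
have g0y0 : g0 y0 = None by rewrite /g0; case: excluded_middle_informative.
have g0u : g0 (pu pi) = Some (pu pi).
  by rewrite /g0; case: excluded_middle_informative => // H; exfalso; apply: H; apply: rt_refl.
have g0hom : forall a b, edge (@pR _ pi) a b -> frelH (@pR _ pi) (pu pi) Q (lab' a b) (g0 a) (g0 b).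
  move=> a b [R Hab]; rewrite /lab'.
  case: ifP => [/andP [/eqP Ea /eqP Eb] | Hne].
    by subst a b; rewrite g0y0 g0u.
  rewrite (Hlab _ _ _ Hab).
  case: (classic (rtu a)) => Ha.
    have Hb : rtu b by apply: rt_trans Ha (rt_step _ _ _ _ (ex_intro _ R Hab)).
    rewrite /g0; destruct (excluded_middle_informative (rtu a)) as [Ha'|Hn']; last by [].
    by destruct (excluded_middle_informative (rtu b)).
  have Hb : ~ rtu b.
    move=> Hb; case: (rt_last Hb) => [Eb | [p [Hup Hpb]]].
      subst b.
      have E := par_uniq Htr (ex_intro _ R Hab) (ex_intro _ L HL); subst a.
      by rewrite !eqxx in Hne.
    have E := par_uniq Htr (ex_intro _ R Hab) Hpb; subst p.
    exact: Ha Hup.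
  rewrite /g0; destruct (excluded_middle_informative (rtu a)) as [Hn'|Hm']; first by [].
  destruct (excluded_middle_informative (rtu b)) as [Hn2|Hm2]; first by [].
  move=> /= E; by apply: (noQ a b); rewrite -E.
have H := Hslo A HvalA vv.
move/sle_AH: H => /(_ None).
rewrite !seval_ksat.
have Hsig : ksat (F:=HF (@pR _ pi) (pu pi) Q) (fun m h => proj1_sig (vv m) h) sig None.
  rewrite -g0r; apply: (Fm_hom (F:=HF (@pR _ pi) (pu pi) Q) g0hom) => // y.
  by right; exists y.
move/(_ Hsig) => Htau.
have [g [Hgr [Hge [Hgv Hgx]]]] := Fm_ext Htau.
have Hgy0 : g y0 = None.
  by case: (Hgv y0) => [//|[x [/idx_inj Ex ->]]]; rewrite Ex.
have := Hge _ _ (ex_intro _ L HL); rewrite /lab' !eqxx /= Hgy0.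
case Egu: (g (pu pi)) => [c|] //= [_ Ec]; subst c.
have := Hgx (pu pi); rewrite /ext eqxx /= Egu.
case=> [[c|] [//= [HS _]]].
case=> [//|[x [/idx_inj Ex]]]; subst x.
rewrite /g0; case: excluded_middle_informative => //= _ [Ec]; subst c.
exact: (p_notS HS).
Qed.
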